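(* Let $l_n,R_n>0$ ($n\in\mathbb N$) satisfy $l_n,R_n\to\infty$, $l_n^2/n\to0$, $n/R_n\to0$, $e^{-\pi l_n/2}R_n\to0$, and let $W_n(z)=\exp\!\big(-l_n\pi-il_n\log\frac{z-n}{z+n}\big)$ for $z\in\mathbb C_+$. Then $W_n(z)\to1$ as $n\to\infty$ uniformly on each compact set $K\subset\mathbb C_+$.
   Context: $\mathbb C_+=\{\operatorname{Im}z>0\}$. For $z\in\mathbb C_+$ one has $\frac{z-n}{z+n}\in\mathbb C_+$, and $\log$ denotes the branch with imaginary part in $(0,\pi)$. *)

(* Defs.v *)
From Stdlib Require Import Reals.
From Coquelicot Require Import Coquelicot.

Open Scope R_scope.

Definition Cexp (z : C) : C :=
  (exp (Re z) * cos (Im z), exp (Re z) * sin (Im z)).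

(* Argument in (0, pi) of a point w of the upper half-plane:
   the angle theta in [0,pi] with cos theta = Re w / |w|. *)
Definition Arg_up (w : C) : R := Ratan.acos (Re w / Cmod w).

(* The branch of log on C_+ with imaginary part in (0, pi):
   log w = ln |w| + i Arg w. *)
Definition Clog_up (w : C) : C := (ln (Cmod w), Arg_up w).

Definition W (l : nat -> R) (n : nat) (z : C) : C :=
  Cexp (Cminus (RtoC (- (l n * PI)))
               (Cmult (Cmult Ci (RtoC (l n)))
                      (Clog_up (Cdiv (Cminus z (RtoC (INR n)))
                                     (Cplus z (RtoC (INR n))))))).

From mathcomp Require Import all_boot all_classical all_reals.
From mathcomp Require Import topology normedtype Rstruct Rstruct_topology.

(* Main.v *)
Require Import Defs.
From Stdlib Require Import Reals Lra Psatz.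
From Coquelicot Require Import Coquelicot.
Open Scope R_scope.
Lemma w_re_im x y m : 0 < m -> 0 < x + m ->
  let w := Cdiv (Cminus (x,y) (RtoC m)) (Cplus (x,y) (RtoC m)) in
  fst w = (x^2+y^2-m^2)/((x+m)^2+y^2) /\ snd w = 2*m*y/((x+m)^2+y^2).
Proof.
intros hm hx w. unfold w, Cdiv, Cminus, Cplus, Cmult, Cinv, Copp, RtoC; simpl.
assert (0 < (x+m)^2+y^2) by nra.
split; field; nra.
Qed.
Lemma ln_bounds t : 0 < t -> 1 - /t <= ln t <= t - 1.
Proof.
intros ht. split.
- pose proof (exp_ineq1_le (ln (/t))). rewrite exp_ln in H by (apply Rinv_0_lt_compat; lra).
  rewrite ln_Rinv in H by lra. lra.
- pose proof (exp_ineq1_le (ln t)). rewrite exp_ln in H by lra. lra.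
Qed.
Lemma W_eq l n z :
  let w := Cdiv (Cminus z (RtoC (INR n))) (Cplus z (RtoC (INR n))) in
  W l n z = (exp (- (l n * (PI - Arg_up w))) * cos (- (l n * ln (Cmod w))),
             exp (- (l n * (PI - Arg_up w))) * sin (- (l n * ln (Cmod w)))).
Proof.
intros w. unfold W, Cexp, Clog_up. fold w.
unfold Cminus, Cmult, Cplus, Copp, Ci, RtoC, Re, Im; simpl.
f_equal; f_equal; try f_equal; ring.
Qed.
Lemma cos_up s : 0 <= s <= PI/2 -> cos s <= 1 - s^2/4.
Proof.
intros [h1 h2].
destruct (cos_bound s 0) as [_ H]; try lra.
unfold cos_approx, cos_term in H. simpl in H.
assert (H' : cos s <= 1 - s^2/2 + s^4/24) by (eapply Rle_trans; [exact H| right; field]).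
assert (PI <= 4) by (pose proof PI_4; lra).
assert (s <= 2) by lra.
assert (s^2 <= 4) by nra.
assert (s^4 <= 4 * s^2) by nra.
assert (0 <= s^2) by nra. set (a := s^2) in *; set (b := s^4) in *; lra.
Qed.

Lemma acos_small a v : 0 < a -> 0 <= v ->
  acos (a / sqrt (a^2 + v^2)) <= 2 * (v / a).
Proof.
intros ha hv.
set (r := sqrt (a^2+v^2)).
assert (hr2 : r * r = a^2 + v^2) by (apply sqrt_sqrt; nra).
assert (hr : 0 < r) by (apply sqrt_lt_R0; nra).
assert (har : a <= r) by nra.
set (c := a / r).
assert (hc0 : 0 < c) by (unfold c; apply Rdiv_lt_0_compat; lra).
assert (hc1 : c <= 1) by (unfold c; apply Rmult_le_reg_r with r; [lra|]; field_simplify; lra).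
set (s := acos c).
pose proof (acos_bound c) as hs. fold s in hs.
assert (hcs : cos s = c) by (apply cos_acos; lra).
assert (hs2 : s <= PI/2).
{ destruct (Rle_lt_dec s (PI/2)) as [h|h]; auto.
  assert (cos s < 0) by (pose proof PI_RGT_0; apply cos_lt_0; lra). lra. }
pose proof (cos_up s (conj (proj1 hs) hs2)) as hcu. rewrite hcs in hcu.
assert (h1 : 1 - c = v^2 / (r * (r + a))).
{ assert (e : 1 - c = (r*r - a*a)/(r*(r+a))) by (unfold c; field; lra).
  rewrite e, hr2. f_equal. ring. }
assert (h2 : v^2 / (r * (r + a)) <= v^2 / (2 * a^2)).
{ apply Rmult_le_compat_l; [nra|]. apply Rinv_le_contravar; nra. }
set (q := v / a).
assert (hq : v = q * a) by (unfold q; field; lra).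
assert (hq0 : 0 <= q) by (unfold q; apply Rdiv_le_0_compat; lra).
assert (v^2 / (2*a^2) = q^2/2) by (rewrite hq; field; lra).
assert (s^2 <= 2 * q^2) by nra.
nra.
Qed.
Lemma geom M x y m : 1 <= M -> Rabs x <= M -> 0 < y <= M -> 4*M <= m ->
  let w := Cdiv (Cminus (x,y) (RtoC m)) (Cplus (x,y) (RtoC m)) in
  0 <= PI - Arg_up w <= 8*M/m /\ Rabs (ln (Cmod w)) <= 4*M/m.
Proof.
intros hM hx hy hm w.
assert (hx' : -M <= x <= M) by (unfold Rabs in hx; destruct (Rcase_abs x); lra).
assert (hm0 : 0 < m) by lra.
destruct (w_re_im x y m hm0 ltac:(lra)) as [hu hv]. fold w in hu, hv.
set (D := (x+m)^2+y^2) in *.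
set (P := (x-m)^2+y^2).
assert (hD : 0 < D) by (unfold D; nra).
assert (hP : 0 < P) by (unfold P; nra).
set (a := (m^2 - x^2 - y^2)/D).
assert (ha : fst w = - a) by (rewrite hu; unfold a; field; lra).
assert (hQ : x^2 + y^2 <= 2 * M^2) by nra.
assert (hmM : 16 * M^2 <= m^2) by nra.
assert (ha0 : 0 < a) by (unfold a; apply Rdiv_lt_0_compat; nra).
set (v := 2*m*y/D) in *.
assert (hv0 : 0 < v) by (unfold v; apply Rdiv_lt_0_compat; nra).
assert (hva : v / a = 2*m*y/(m^2-x^2-y^2)) by (unfold v, a; field; nra).
assert (hva' : v / a <= 4*M/m).
{ rewrite hva. apply Rmult_le_reg_r with ((m^2-x^2-y^2)*m); [nra|].
  field_simplify; try nra. }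
split.
- unfold Arg_up, Cmod, Re. rewrite ha, hv.
  replace ((- a)^2) with (a^2) by ring.
  replace (- a / sqrt (a^2 + v^2)) with (- (a / sqrt (a^2+v^2))) by (field; apply Rgt_not_eq, sqrt_lt_R0; nra).
  rewrite acos_opp.
  pose proof (acos_small a v ha0 ltac:(lra)).
  pose proof (acos_bound (a / sqrt (a ^ 2 + v ^ 2))).
  replace (8*M/m) with (2*(4*M/m)) by (field; lra).
  lra.
- assert (hmod2 : Cmod w * Cmod w = P / D).
  { unfold Cmod. rewrite sqrt_sqrt by nra. rewrite hu, hv. unfold v, P, D. field. unfold D in hD; nra. }
  assert (hc : 0 < Cmod w).
  { unfold Cmod. apply sqrt_lt_R0. rewrite hv. nra. }
  assert (hln : 2 * ln (Cmod w) = ln (P / D)).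
  { rewrite <- hmod2, ln_mult by lra. ring. }
  assert (hPD : 0 < P / D) by (apply Rdiv_lt_0_compat; lra).
  destruct (ln_bounds _ hPD) as [l1 l2].
  assert (e1 : P / D - 1 = - 4*m*x / D) by (replace (-4*m*x) with (P - D) by (unfold P, D; ring); field; lra).
  assert (e2 : 1 - / (P / D) = - 4*m*x / P) by (replace (-4*m*x) with (P - D) by (unfold P, D; ring); field; lra).
  assert (hD2 : m^2/2 <= D) by (unfold D; nra).
  assert (hP2 : m^2/2 <= P) by (unfold P; nra).
  assert (k : forall Z, m^2/2 <= Z -> 4*m*M/Z <= 8*M/m).
  { intros Z hZ. apply Rle_trans with (4*m*M/(m^2/2)).
    - unfold Rdiv. apply Rmult_le_compat_l; [nra|]. apply Rinv_le_contravar; nra.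
    - right. field. lra. }
  assert (k1 : -4*m*x/D <= 4*m*M/D).
  { unfold Rdiv. apply Rmult_le_compat_r; [apply Rlt_le, Rinv_0_lt_compat; lra| nra]. }
  assert (k2 : -(4*m*M)/P <= -4*m*x/P).
  { unfold Rdiv. apply Rmult_le_compat_r; [apply Rlt_le, Rinv_0_lt_compat; lra| nra]. }
  assert (k3 : -(4*m*M)/P = -(4*m*M/P)) by (field; lra).
  pose proof (k D hD2) as kD. pose proof (k P hP2) as kP.
  assert (eL : ln (Cmod w) = ln (P/D) / 2) by lra.
  rewrite eL. apply Rabs_le. 
  replace (4*M/m) with ((8*M/m)/2) by (field; lra).
  split; lra.
Qed.

Lemma cos_lo s : -(PI/2) <= s <= PI/2 -> 1 - s^2/2 <= cos s.
Proof.
intros [h1 h2].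
destruct (cos_bound s 0) as [H _]; try lra.
unfold cos_approx, cos_term in H. simpl in H.
eapply Rle_trans; [|exact H]. right; field.
Qed.

Lemma final_bound t phi eps : 0 <= t -> Rabs phi <= PI/2 -> 0 < eps ->
  t^2 + phi^2 < eps^2 ->
  Cmod (Cminus (exp (-t) * cos phi, exp (-t) * sin phi) (RtoC 1)) < eps.
Proof.
intros ht hphi he hs.
assert (hphi' : -(PI/2) <= phi <= PI/2) by (unfold Rabs in hphi; destruct (Rcase_abs phi); lra).
pose proof (cos_lo phi hphi') as hc.
pose proof (exp_ineq1_le (-t)) as hE.
assert (hE1 : exp (-t) <= 1).
{ rewrite <- exp_0. destruct ht as [ht|ht]; [left; apply exp_increasing; lra | right; rewrite <- ht; f_equal; ring]. }
pose proof (exp_pos (-t)) as hE0.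
pose proof (sin2_cos2 phi) as hsc. unfold Rsqr in hsc.
unfold Cmod, Cminus, Cplus, Copp, RtoC; cbn [fst snd].
rewrite <- (sqrt_pow2 eps) by lra.
apply sqrt_lt_1_alt. split; [apply Rplus_le_le_0_compat; apply pow2_ge_0|].
set (E := exp (-t)) in *. set (c := cos phi) in *. set (s := sin phi) in *.
match goal with |- ?L < _ => assert (e : L = (1-E)^2 + 2*E*(1-c)) by nra end.
rewrite e.
assert ((1-E)^2 <= t^2) by nra.
assert (2*E*(1-c) <= phi^2) by nra.
lra.
Qed.

From mathcomp Require Import all_boot all_order all_classical all_reals.
From mathcomp Require Import topology normedtype Rstruct Rstruct_topology.
Import numFieldNormedType.Exports.
Import Order.TTheory.

Lemma bnd (K : classical_sets.set (R*R)) : compact K -> exists M, 0 < M /\ forall z, K z -> Rabs (fst z) <= M /\ Rabs (snd z) <= M.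
Proof.
move=> cK.
have := compact_bounded (V := ((R:realType) * (R:realType))%type : normedModType (R:realType)) cK.
move=> [M [_ HM]].
exists (Rmax 1 (M+1)); split.
  apply: Rlt_le_trans (Rmax_l _ _); lra.
move=> z Kz.
have hx : (M < Rmax 1 (M+1))%O.
  apply/RltP; apply: Rlt_le_trans (Rmax_r _ _); lra.
have := HM _ hx z Kz.
rewrite /= prod_normE ge_max => /andP [h1 h2].
by split; rewrite RabsE; apply/RleP.
Qed.

Theorem lemma3 (l Rn : nat -> R)
  (hl : forall n, 0 < l n) (hR : forall n, 0 < Rn n)
  (hl_inf : is_lim_seq l p_infty)
  (hR_inf : is_lim_seq Rn p_infty)
  (hl2 : is_lim_seq (fun n => (l n) ^ 2 / INR n) 0)
  (hnR : is_lim_seq (fun n => INR n / Rn n) 0)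
  (hexp : is_lim_seq (fun n => exp (- PI * l n / 2) * Rn n) 0) :
  forall K : classical_sets.set (R * R),
    compact K ->
    (forall z : C, K z -> 0 < Im z) ->
    forall eps : R, 0 < eps ->
      exists N : nat, forall n : nat, (N <= n)%coq_nat ->
        forall z : C, K z -> Cmod (Cminus (W l n z) (RtoC 1)) < eps.
Proof.
intros K cK hK eps heps.
destruct (bnd K cK) as [M0 [hM0 hMb]].
set (M := Rmax 1 M0).
assert (hM1 : 1 <= M) by apply Rmax_l.
assert (hMM0 : M0 <= M) by apply Rmax_r.
set (d := Rmin 1 eps / (9 * M)).
assert (hmin : 0 < Rmin 1 eps) by (apply Rmin_pos; lra).
assert (hd : 0 < d) by (unfold d; apply Rdiv_lt_0_compat; lra).
assert (hMd : M * d = Rmin 1 eps / 9) by (unfold d; field; lra).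
pose proof (Rmin_l 1 eps) as hmin1. pose proof (Rmin_r 1 eps) as hmin2.
apply is_lim_seq_spec in hl_inf. apply is_lim_seq_spec in hl2.
pose proof (proj2 (is_lim_seq_spec _ _) is_lim_seq_INR) as hI.
destruct (hl_inf 1) as [N1 h1].
destruct (hl2 (mkposreal d hd)) as [N2 h2].
destruct (hI (4*M)) as [N3 h3].
exists (Nat.max N1 (Nat.max N2 N3)).
intros n hn z Kz.
assert (hn1 : (N1 <= n)%coq_nat) by lia.
assert (hn2 : (N2 <= n)%coq_nat) by lia.
assert (hn3 : (N3 <= n)%coq_nat) by lia.
specialize (h1 n hn1). specialize (h2 n hn2). specialize (h3 n hn3). simpl in h2.
set (m := INR n) in *.
assert (hm : 0 < m) by lra.
assert (hq2 : l n ^ 2 / m < d).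
{ apply Rle_lt_trans with (2 := h2). rewrite Rminus_0_r. apply Rle_abs. }
set (q := l n / m).
assert (hq0 : 0 <= q) by (unfold q; apply Rlt_le, Rdiv_lt_0_compat; lra).
assert (hq : q < d).
{ apply Rle_lt_trans with (2 := hq2). unfold q, Rdiv.
  apply Rmult_le_compat_r; [left; apply Rinv_0_lt_compat; lra| nra]. }
destruct z as [x y].
destruct (hMb _ Kz) as [hx hy]. simpl in hx, hy.
pose proof (hK _ Kz) as hy0. unfold Im in hy0; simpl in hy0.
assert (hy' : 0 < y <= M) by (split; [exact hy0| unfold Rabs in hy; destruct (Rcase_abs y); lra]).
destruct (geom M x y m hM1 ltac:(lra) hy' ltac:(lra)) as [[g1 g2] g3].
rewrite W_eq.
set (A := PI - Arg_up _) in *.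
set (L := ln (Cmod _)) in *.
assert (hlA : l n * A <= 8 * (M * q)).
{ replace (8 * (M*q)) with (l n * (8*M/m)) by (unfold q; field; lra).
  apply Rmult_le_compat_l; lra. }
assert (hlL : Rabs (- (l n * L)) <= 4 * (M * q)).
{ rewrite Rabs_Ropp Rabs_mult (Rabs_right (l n)); [|lra].
  replace (4 * (M*q)) with (l n * (4*M/m)) by (unfold q; field; lra).
  apply Rmult_le_compat_l; lra. }
assert (hp : M * q < M * d) by (apply Rmult_lt_compat_l; lra).
assert (hp0 : 0 <= M * q) by nra.
set (p := M * q) in *.
apply final_bound.
- nra.
- pose proof PI2_1. lra.
- lra.
- assert (t1 : (l n * A)^2 <= (8 * p)^2) by (apply pow_incr; nra).
  assert (t2 : (- (l n * L))^2 <= (4 * p)^2).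
  { rewrite <- (pow2_abs (- (l n * L))). apply pow_incr. split; [apply Rabs_pos| lra]. }
  assert (p^2 < (eps/9)^2) by nra.
  nra.
Qed.
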